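(* (a) $[0,1]^\mathbb{N}/c_0\equiv_B\mathbb{T}^\mathbb{N}/G_0$. (b) For every $1\le p<\infty$, $[0,1]^\mathbb{N}/\ell^p\equiv_B\mathbb{T}^\mathbb{N}/G_p$.
   Context: $\mathbb{T}=\{z\in\mathbb{C}:|z|=1\}$; $c_0$ is the space of real sequences converging to $0$; $\ell^p$ the real sequences with $\sum|\alpha_n|^p<\infty$. $G_0=\{(e^{i\alpha_n})_n:(\alpha_n)\in c_0\}$ and $G_p=\{(e^{i\alpha_n})_n:(\alpha_n)\in\ell^p\}$. $[0,1]^\mathbb{N}/c_0$ is the equivalence relation on $[0,1]^\mathbb{N}$ (product topology) given by $\alpha\sim\beta\iff\alpha-\beta\in c_0$; similarly $[0,1]^\mathbb{N}/\ell^p$ with $\ell^p$. $\mathbb{T}^\mathbb{N}/G$ is the equivalence relation on $\mathbb{T}^\mathbb{N}$ given by $z\sim w\iff zw^{-1}\in G$ (coordinatewise operations). For equivalence relations $E,F$ on Polish spaces $X,Y$, $E\le_B F$ means there is a Borel map $f:X\to Y$ with $xEy\iff f(x)Ff(y)$ for all $x,y$; $E\equiv_B F$ means $E\le_B F$ and $F\le_B E$. *)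

(* Defs.v *)
From Stdlib Require Import Reals Lra.
Open Scope R_scope.

(** * Polish-space setup
   Spaces of sequences nat -> A, where A is R or R*R (= C), with the product
   topology; subspaces [0,1]^N and T^N are given as predicates. *)

Definition distR (a b : R) : R := Rabs (a - b).
Definition distC (a b : R * R) : R :=
  Rmax (Rabs (fst a - fst b)) (Rabs (snd a - snd b)).

(** Open sets of the product topology on nat -> A (A metric with distance d):
    basic neighbourhoods constrain finitely many coordinates. *)
Definition prod_open {A : Type} (d : A -> A -> R) (U : (nat -> A) -> Prop) : Prop :=
  forall x, U x -> exists (N : nat) (eps : R), 0 < eps /\
    forall y, (forall i, (i < N)%nat -> d (x i) (y i) < eps) -> U y.

Inductive borel {A : Type} (d : A -> A -> R) : ((nat -> A) -> Prop) -> Prop :=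
| borel_open : forall U, prod_open d U -> borel d U
| borel_compl : forall B, borel d B -> borel d (fun x => ~ B x)
| borel_union : forall Bs : nat -> (nat -> A) -> Prop,
    (forall k, borel d (Bs k)) -> borel d (fun x => exists k, Bs k x).

(** f maps the subspace X into Y and is Borel for the subspace Borel structures
    (Borel sets of a subspace = traces of ambient Borel sets). *)
Definition borel_map {A B : Type} (dA : A -> A -> R) (dB : B -> B -> R)
  (X : (nat -> A) -> Prop) (Y : (nat -> B) -> Prop)
  (f : (nat -> A) -> (nat -> B)) : Prop :=
  (forall x, X x -> Y (f x)) /\
  forall S, borel dB S -> exists C, borel dA C /\ forall x, X x -> (S (f x) <-> C x).

Definition borel_reducible {A B : Type} (dA : A -> A -> R) (dB : B -> B -> R)
  (X : (nat -> A) -> Prop) (E : (nat -> A) -> (nat -> A) -> Prop)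
  (Y : (nat -> B) -> Prop) (F : (nat -> B) -> (nat -> B) -> Prop) : Prop :=
  exists f, borel_map dA dB X Y f /\
    forall x y, X x -> X y -> (E x y <-> F (f x) (f y)).

Definition borel_bireducible {A B : Type} (dA : A -> A -> R) (dB : B -> B -> R)
  (X : (nat -> A) -> Prop) (E : (nat -> A) -> (nat -> A) -> Prop)
  (Y : (nat -> B) -> Prop) (F : (nat -> B) -> (nat -> B) -> Prop) : Prop :=
  borel_reducible dA dB X E Y F /\ borel_reducible dB dA Y F X E.

Definition cube (a : nat -> R) : Prop := forall n, 0 <= a n <= 1.
Definition torusN (z : nat -> R * R) : Prop :=
  forall n, fst (z n) ^ 2 + snd (z n) ^ 2 = 1.

Definition cmul (z w : R * R) : R * R :=
  (fst z * fst w - snd z * snd w, fst z * snd w + snd z * fst w).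
Definition cinv (w : R * R) : R * R :=
  let n := fst w ^ 2 + snd w ^ 2 in (fst w / n, - snd w / n).
Definition cexpi (t : R) : R * R := (cos t, sin t).

Definition c0 (a : nat -> R) : Prop := Un_cv a 0.
(** |x|^p with the convention 0^p = 0 (Rpower needs a positive base). *)
Definition rpow (x p : R) : R := if Req_EM_T x 0 then 0 else Rpower x p.
Definition lp (p : R) (a : nat -> R) : Prop :=
  exists l, infinite_sum (fun n => rpow (Rabs (a n)) p) l.

Definition cube_rel (S : (nat -> R) -> Prop) (a b : nat -> R) : Prop :=
  S (fun n => a n - b n).

Definition Gof (S : (nat -> R) -> Prop) (z : nat -> R * R) : Prop :=
  exists alpha, S alpha /\ forall n, z n = cexpi (alpha n).

Definition torus_rel (G : (nat -> R * R) -> Prop) (z w : nat -> R * R) : Prop :=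
  G (fun n => cmul (z n) (cinv (w n))).

(* Main.v *)
Require Import Defs.
From Stdlib Require Import Reals Lra Lia Psatz Ratan.
Open Scope R_scope.


Lemma abs_sin_le x : Rabs (sin x) <= Rabs x.
Proof.
  pose proof PI2_1 as Hpi. pose proof (SIN_bound x) as Hb.
  destruct (Rtotal_order x 0) as [H|[H|H]].
  - pose proof (sin_gt_x x H).
    assert (sin x <= 0 \/ 0 < sin x) as [H2|H2] by lra.
    + rewrite !Rabs_left1 by lra. lra.
    + rewrite (Rabs_left1 x) by lra. rewrite (Rabs_pos_eq (sin x)) by lra.
      assert (-x >= 1 \/ -x < 1) as [H3|H3] by lra. lra.
      pose proof (sin_ge_0 (-x)) as H4. rewrite sin_neg in H4. lra.
  - subst. rewrite sin_0. lra.
  - pose proof (sin_lt_x x H).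
    assert (sin x >= 0 \/ sin x < 0) as [H2|H2] by lra.
    + rewrite !Rabs_pos_eq by lra. lra.
    + rewrite (Rabs_pos_eq x) by lra. rewrite (Rabs_left (sin x)) by lra.
      assert (x >= 1 \/ x < 1) as [H3|H3] by lra. lra.
      pose proof (sin_ge_0 x). lra.
Qed.

Lemma abs_1mcos_le x : Rabs (1 - cos x) <= Rabs x.
Proof.
  replace x with (2 * (x/2)) at 1 by field.
  rewrite cos_2a_sin.
  pose proof (abs_sin_le (x/2)). pose proof (SIN_bound (x/2)).
  replace (1 - (1 - 2 * sin (x / 2) * sin (x / 2))) with (2 * (sin (x/2) * sin (x/2))) by ring.
  rewrite Rabs_mult, Rabs_mult. rewrite (Rabs_pos_eq 2) by lra.
  assert (Rabs (sin (x/2)) <= 1) by (apply Rabs_le; lra).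
  assert (Rabs (x/2) = Rabs x / 2).
  { unfold Rdiv. rewrite Rabs_mult, Rabs_inv, (Rabs_pos_eq 2) by lra. reflexivity. }
  pose proof (Rabs_pos (sin (x/2))).
  nra.
Qed.

Lemma sin_half_lb t : 0 <= t <= 1 -> t / 2 <= sin t.
Proof.
  intros Ht. pose proof PI2_1.
  destruct (SIN t) as [H1 _]; try lra.
  eapply Rle_trans; [|exact H1].
  unfold sin_lb, sin_approx, sin_term.
  rewrite !tech5. simpl sum_f_R0.
  replace (INR (Factorial.fact (2*3+1))) with 5040 by (rewrite INR_IZR_INZ; simpl; reflexivity).
  simpl Factorial.fact.
  replace (INR 1) with 1 by (rewrite INR_IZR_INZ; reflexivity).
  replace (INR 6) with 6 by (rewrite INR_IZR_INZ; reflexivity).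
  replace (INR 120) with 120 by (rewrite INR_IZR_INZ; reflexivity).
  simpl pow.
  set (t3 := t*(t*(t*1))). set (t5 := t*(t*(t*(t*(t*1))))).
  set (t7 := t*(t*(t*(t*(t*(t*(t*1))))))).
  assert (t*t <= 1) by nra.
  assert (0 <= t3 <= t) by (unfold t3; split; nra).
  assert (0 <= t5 <= t3) by (replace t5 with (t*t*t3) by (unfold t5,t3; ring); split; nra).
  assert (0 <= t7 <= t5) by (replace t7 with (t*t*t5) by (unfold t5,t7; ring); split; nra).
  unfold t3,t5,t7 in *. lra.
Qed.


Definition interleave (a b : nat -> R) (i : nat) : R :=
  if Nat.even i then a (Nat.div2 i) else b (Nat.div2 i).

Lemma ie0 a b n : interleave a b (2*n) = a n.
Proof. unfold interleave. rewrite Nat.even_mul, Nat.div2_double. reflexivity. Qed.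
Lemma ie1 a b n : interleave a b (2*n+1) = b n.
Proof.
  unfold interleave. replace (2*n+1)%nat with (S (2*n)) by lia.
  rewrite Nat.even_succ, Nat.div2_succ_double.
  replace (Nat.odd (2*n)) with false. reflexivity.
  rewrite <- Nat.negb_even, Nat.even_mul. reflexivity.
Qed.
Lemma ie_div (i : nat) : (i = 2 * Nat.div2 i \/ i = 2 * Nat.div2 i + 1)%nat.
Proof. pose proof (Nat.div2_odd i). destruct (Nat.odd i); simpl in H; lia. Qed.

Definition good (S : (nat -> R) -> Prop) : Prop :=
  (forall a b c C, S b -> S c -> (forall n, Rabs (a n) <= C * (Rabs (b n) + Rabs (c n))) -> S a) /\
  (forall a b, S (interleave a b) -> S a /\ S b) /\
  (forall a b, S a -> S b -> S (interleave a b)).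

Lemma good_c0 : good c0.
Proof.
  unfold c0, Un_cv, R_dist. split; [|split].
  - intros a b c C Hb Hc Hd eps Heps.
    set (C' := Rmax C 1). assert (HC : 1 <= C') by apply Rmax_r.
    assert (HC2 : C <= C') by apply Rmax_l.
    destruct (Hb (eps / (2 * C'))) as [N1 HN1]. { apply Rdiv_lt_0_compat; lra. }
    destruct (Hc (eps / (2 * C'))) as [N2 HN2]. { apply Rdiv_lt_0_compat; lra. }
    exists (max N1 N2). intros n Hn.
    specialize (HN1 n ltac:(lia)). specialize (HN2 n ltac:(lia)). specialize (Hd n).
    rewrite Rminus_0_r in *.
    pose proof (Rabs_pos (b n)). pose proof (Rabs_pos (c n)).
    assert (C' * (Rabs (b n) + Rabs (c n)) < eps).
    { assert (Rabs (b n) + Rabs (c n) < eps / C').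
      { replace (eps / C') with (eps / (2*C') + eps/(2*C')) by (field; lra). lra. }
      apply (Rmult_lt_compat_l C') in H1; [|lra].
      replace (C' * (eps / C')) with eps in H1 by (field; lra). lra. }
    nra.
  - intros a b H. split.
    + intros eps Heps. destruct (H eps Heps) as [N HN]. exists N. intros n Hn.
      rewrite <- (ie0 a b). apply HN. lia.
    + intros eps Heps. destruct (H eps Heps) as [N HN]. exists N. intros n Hn.
      rewrite <- (ie1 a b). apply HN. lia.
  - intros a b Ha Hb eps Heps.
    destruct (Ha eps Heps) as [N1 HN1]. destruct (Hb eps Heps) as [N2 HN2].
    exists (2 * max N1 N2)%nat. intros i Hi.
    destruct (ie_div i) as [E|E]; rewrite E.
    + rewrite ie0. apply HN1. lia.
    + rewrite ie1. apply HN2. lia.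
Qed.


Lemma cos1_ub : cos 1 <= 7/8.
Proof.
  replace 1 with (2 * (1/2)) by field. rewrite cos_2a_sin.
  pose proof (sin_half_lb (1/2) ltac:(lra)). nra.
Qed.

Lemma angle_lb_pos t : 0 <= t <= PI -> t <= 32 * Rmax (Rabs (cos t - 1)) (Rabs (sin t - 0)).
Proof.
  intros Ht. pose proof PI2_1. pose proof PI_4.
  assert (Hm1 : Rabs (cos t - 1) <= Rmax (Rabs (cos t - 1)) (Rabs (sin t - 0))) by apply Rmax_l.
  assert (Hm2 : Rabs (sin t - 0) <= Rmax (Rabs (cos t - 1)) (Rabs (sin t - 0))) by apply Rmax_r.
  destruct (Rle_lt_dec t 1) as [H1|H1].
  - pose proof (sin_half_lb t ltac:(lra)).
    rewrite Rminus_0_r in *.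
    pose proof (Rle_abs (sin t)). lra.
  - pose proof (cos_decreasing_1 1 t ltac:(lra) ltac:(lra) ltac:(lra) ltac:(lra) H1).
    pose proof cos1_ub.

    pose proof (Rle_abs (-(cos t - 1))) as H5. rewrite Rabs_Ropp in H5. lra.
Qed.

Lemma angle_lb t : -PI <= t <= PI -> Rabs t <= 32 * distC (cexpi t) (1,0).
Proof.
  intros Ht. unfold distC, cexpi; simpl.
  destruct (Rle_dec 0 t).
  - rewrite Rabs_pos_eq by lra. apply angle_lb_pos; lra.
  - rewrite Rabs_left by lra.
    pose proof (angle_lb_pos (-t) ltac:(lra)).
    rewrite cos_neg, sin_neg in H.
    replace (Rabs (- sin t - 0)) with (Rabs (sin t - 0)) in H; [lra|].
    rewrite <- Rabs_Ropp. f_equal. ring.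
Qed.

Lemma angle_ub t : distC (cexpi t) (1,0) <= Rabs t.
Proof.
  unfold distC, cexpi; simpl. apply Rmax_lub.
  - rewrite <- Rabs_Ropp. replace (- (cos t - 1)) with (1 - cos t) by ring. apply abs_1mcos_le.
  - rewrite Rminus_0_r. apply abs_sin_le.
Qed.

Lemma abs_comb x y z w : Rabs x <= 1 -> Rabs z <= 1 -> Rabs (x * y + z * w) <= Rabs y + Rabs w.
Proof.
  intros. eapply Rle_trans; [apply Rabs_triang|]. rewrite !Rabs_mult.
  pose proof (Rabs_pos y). pose proof (Rabs_pos w). nra.
Qed.

Lemma cexpi_lip a b : distC (cexpi a) (cexpi b) <= 2 * Rabs (a - b).
Proof.
  pose proof (angle_ub (a - b)) as H. unfold distC, cexpi in *; simpl in *.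
  pose proof (Rmax_l (Rabs (cos (a - b) - 1)) (Rabs (sin (a - b) - 0))).
  pose proof (Rmax_r (Rabs (cos (a - b) - 1)) (Rabs (sin (a - b) - 0))).
  replace a with (b + (a - b)) by ring. rewrite cos_plus, sin_plus.
  replace (b + (a - b) - b) with (a - b) by ring.
  set (d := a - b) in *.
  assert (Rabs (cos b) <= 1) by (apply Rabs_le; apply COS_bound).
  assert (Rabs (sin b) <= 1) by (apply Rabs_le; apply SIN_bound).
  assert (Rabs (- sin b) <= 1) by (rewrite Rabs_Ropp; auto).
  rewrite Rminus_0_r in *.
  apply Rmax_lub.
  - replace (cos b * cos d - sin b * sin d - cos b) with (cos b * (cos d - 1) + (- sin b) * sin d) by ring.
    eapply Rle_trans; [apply abs_comb; auto|]. lra.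
  - replace (sin b * cos d + cos b * sin d - sin b) with (sin b * (cos d - 1) + cos b * sin d) by ring.
    eapply Rle_trans; [apply abs_comb; auto|]. lra.
Qed.

Definition ang (u : R * R) : R :=
  if Rle_dec 0 (snd u) then acos (fst u) else - acos (fst u).

Lemma ang_spec u : fst u ^ 2 + snd u ^ 2 = 1 -> cexpi (ang u) = u /\ -PI <= ang u <= PI.
Proof.
  destruct u as [c s]; simpl. intros H.
  assert (Hc : -1 <= c <= 1) by nra.
  pose proof (acos_bound c).
  assert (Hs : sqrt (1 - c²) = Rabs s).
  { replace (1 - c²) with (s²) by (unfold Rsqr; nra). apply sqrt_Rsqr_abs. }
  unfold ang, cexpi; simpl. destruct (Rle_dec 0 s).
  - rewrite cos_acos, sin_acos by auto. rewrite Hs, Rabs_pos_eq by auto. split; [reflexivity|lra].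
  - rewrite cos_neg, sin_neg, cos_acos, sin_acos by auto. rewrite Hs, Rabs_left by lra.
    split; [f_equal; ring|lra].
Qed.


Lemma rpow_nonneg x p : 0 <= rpow x p.
Proof. unfold rpow. destruct (Req_EM_T x 0). lra. unfold Rpower. left; apply exp_pos. Qed.

Lemma rpow_le x y p : 0 < p -> 0 <= x <= y -> rpow x p <= rpow y p.
Proof.
  intros Hp Hxy. unfold rpow.
  destruct (Req_EM_T x 0); destruct (Req_EM_T y 0).
  - lra.
  - left; unfold Rpower; apply exp_pos.
  - lra.
  - apply Rle_Rpower_l; lra.
Qed.

Lemma rpow_mul x y p : 0 <= x -> 0 <= y -> rpow (x * y) p = rpow x p * rpow y p.
Proof.
  intros Hx Hy. unfold rpow.
  destruct (Req_EM_T x 0) as [e|nx].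
  { subst. rewrite Rmult_0_l. destruct (Req_EM_T 0 0); [ring|lra]. }
  destruct (Req_EM_T y 0) as [e|ny].
  { subst. rewrite Rmult_0_r. destruct (Req_EM_T 0 0); [ring|lra]. }
  destruct (Req_EM_T (x*y) 0) as [e|nxy].
  { exfalso. apply Rmult_integral in e. tauto. }
  rewrite Rpower_mult_distr; lra.
Qed.

Definition psum (p : R) (a : nat -> R) (n : nat) := sum_f_R0 (fun k => rpow (Rabs (a k)) p) n.

Lemma psum_mono p a n m : (n <= m)%nat -> psum p a n <= psum p a m.
Proof.
  intros H. induction H. lra. unfold psum in *. simpl. pose proof (rpow_nonneg (Rabs (a (S m))) p). lra.
Qed.

Lemma lp_iff p a : lp p a <-> exists M, forall n, psum p a n <= M.
Proof.
  split.
  - intros [l Hl]. exists l. intros n. apply Rnot_lt_le. intros Hlt.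
    destruct (Hl (psum p a n - l)) as [N HN]; [lra|].
    specialize (HN (max n N) ltac:(lia)).
    pose proof (psum_mono p a n (max n N) ltac:(lia)).
    unfold Rdist, psum in *. pose proof (Rle_abs (sum_f_R0 (fun k : nat => rpow (Rabs (a k)) p) (Init.Nat.max n N) - l)). lra.
  - intros [M HM].
    assert (Hg : Un_growing (psum p a)).
    { intros n. apply psum_mono. lia. }
    assert (Hb : has_ub (psum p a)).
    { exists M. intros x [i ->]. apply HM. }
    destruct (growing_cv _ Hg Hb) as [l Hl]. exists l. exact Hl.
Qed.

Lemma psum_inter p a b n : psum p (interleave a b) (2*n+1) = psum p a n + psum p b n.
Proof.
  induction n.
  - unfold psum. simpl. unfold interleave; simpl. ring.
  - replace (2 * S n + 1)%nat with (S (S (2*n+1))) by lia.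
    unfold psum in *. change (sum_f_R0 (fun k => rpow (Rabs (interleave a b k)) p) (S (S (2 * n + 1))))
      with (sum_f_R0 (fun k => rpow (Rabs (interleave a b k)) p) (2 * n + 1) + rpow (Rabs (interleave a b (S (2*n+1)))) p + rpow (Rabs (interleave a b (S (S (2*n+1))))) p).
    rewrite IHn. simpl sum_f_R0.
    replace (S (2*n+1)) with (2 * S n)%nat by lia. rewrite ie0.
    replace (S (2 * S n)) with (2 * S n + 1)%nat by lia. rewrite ie1. ring.
Qed.

Lemma good_lp p : 1 <= p -> good (lp p).
Proof.
  intros Hp. split; [|split].
  - intros a b c C Hb Hc Hd. rewrite lp_iff in *.
    destruct Hb as [Mb HMb]. destruct Hc as [Mc HMc].
    set (K := 2 * Rmax C 1). assert (HK : 2 <= K) by (unfold K; pose proof (Rmax_r C 1); lra).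
    assert (HC2 : C <= Rmax C 1) by apply Rmax_l.
    exists (rpow K p * (Mb + Mc)). intros n.
    assert (Hterm : forall k, rpow (Rabs (a k)) p <= rpow K p * (rpow (Rabs (b k)) p + rpow (Rabs (c k)) p)).
    { intros k. specialize (Hd k).
      pose proof (Rabs_pos (b k)). pose proof (Rabs_pos (c k)). pose proof (Rabs_pos (a k)).
      assert (Hd' : Rabs (a k) <= Rmax C 1 * (Rabs (b k) + Rabs (c k))).
      { eapply Rle_trans; [exact Hd|]. apply Rmult_le_compat_r; lra. }
      pose proof (Rmax_r C 1). clear Hd.
      destruct (Rle_dec (Rabs (b k)) (Rabs (c k))).
      + assert (Hk2 : Rabs (a k) <= K * Rabs (c k)) by (unfold K; nra).
        eapply Rle_trans. apply (rpow_le _ (K * Rabs (c k)) p); [lra|split; [lra|exact Hk2]].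
        rewrite rpow_mul by lra. pose proof (rpow_nonneg K p). pose proof (rpow_nonneg (Rabs (b k)) p). nra.
      + assert (Hk2 : Rabs (a k) <= K * Rabs (b k)) by (unfold K; nra).
        eapply Rle_trans. apply (rpow_le _ (K * Rabs (b k)) p); [lra|split; [lra|exact Hk2]].
        rewrite rpow_mul by lra. pose proof (rpow_nonneg K p). pose proof (rpow_nonneg (Rabs (c k)) p). nra. }
    unfold psum. eapply Rle_trans. apply sum_Rle. intros k _. apply Hterm.
    replace (sum_f_R0 (fun k => rpow K p * (rpow (Rabs (b k)) p + rpow (Rabs (c k)) p)) n)
      with (rpow K p * (psum p b n + psum p c n)).
    2:{ unfold psum. rewrite <- plus_sum, scal_sum. apply sum_eq. intros; ring. }
    specialize (HMb n). specialize (HMc n). pose proof (rpow_nonneg K p).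
    rewrite (Rmult_comm (rpow K p)). nra.
  - intros a b H. rewrite !lp_iff in *. destruct H as [M HM].
    assert (forall n, psum p a n <= M /\ psum p b n <= M).
    { intros n. specialize (HM (2*n+1)%nat). rewrite psum_inter in HM.
      assert (forall q, 0 <= psum p q n).
      { intros q. unfold psum. apply cond_pos_sum. intros; apply rpow_nonneg. }
      pose proof (H a). pose proof (H b). lra. }
    split; exists M; apply H.
  - intros a b Ha Hb. rewrite lp_iff in *. destruct Ha as [Ma HMa]. destruct Hb as [Mb HMb].
    exists (Ma + Mb). intros n.
    eapply Rle_trans. apply (psum_mono p _ n (2*n+1)). lia.
    rewrite psum_inter. specialize (HMa n). specialize (HMb n). lra.
Qed.


Lemma borel_preimage {A B : Type} (dA : A -> A -> R) (dB : B -> B -> R)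
  (f : (nat -> A) -> (nat -> B)) :
  (forall U, prod_open dB U -> prod_open dA (fun x => U (f x))) ->
  forall S, borel dB S -> borel dA (fun x => S (f x)).
Proof.
  intros Hf S HS. induction HS.
  - apply borel_open. apply Hf. exact H.
  - apply borel_compl. exact IHHS.
  - apply (borel_union dA (fun k x => Bs k (f x))). exact H0.
Qed.

Lemma borel_map_of {A B : Type} (dA : A -> A -> R) (dB : B -> B -> R)
  (X : (nat -> A) -> Prop) (Y : (nat -> B) -> Prop) (f : (nat -> A) -> (nat -> B)) :
  (forall x, X x -> Y (f x)) ->
  (forall U, prod_open dB U -> prod_open dA (fun x => U (f x))) ->
  borel_map dA dB X Y f.
Proof.
  intros HXY Hf. split; auto. intros S HS. exists (fun x => S (f x)). split.
  - apply (borel_preimage dA dB); auto.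
  - intros; tauto.
Qed.

Definition f1 (x : nat -> R) : nat -> R * R := fun n => cexpi (x n).
Definition f2 (z : nat -> R * R) : nat -> R :=
  interleave (fun n => (fst (z n) + 1) / 2) (fun n => (snd (z n) + 1) / 2).

Lemma f1_open U : prod_open distC U -> prod_open distR (fun x => U (f1 x)).
Proof.
  intros HU x Hx. destruct (HU _ Hx) as [N [eps [He HN]]].
  exists N, (eps / 2). split; [lra|]. intros y Hy. apply HN. intros i Hi.
  specialize (Hy i Hi). unfold f1. eapply Rle_lt_trans; [apply cexpi_lip|].
  unfold distR in Hy. lra.
Qed.

Lemma distC_fst a b : Rabs (fst a - fst b) <= distC a b.
Proof. apply Rmax_l. Qed.
Lemma distC_snd a b : Rabs (snd a - snd b) <= distC a b.
Proof. apply Rmax_r. Qed.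

Lemma half_diff x y : Rabs ((x + 1) / 2 - (y + 1) / 2) = Rabs (x - y) / 2.
Proof.
  replace ((x + 1) / 2 - (y + 1) / 2) with ((x - y) * / 2) by field.
  rewrite Rabs_mult, Rabs_inv, (Rabs_pos_eq 2) by lra. reflexivity.
Qed.

Lemma f2_open U : prod_open distR U -> prod_open distC (fun z => U (f2 z)).
Proof.
  intros HU z Hz. destruct (HU _ Hz) as [N [eps [He HN]]].
  exists N, eps. split; [lra|]. intros w Hw. apply HN. intros i Hi.
  unfold distR, f2. destruct (ie_div i) as [E|E]; rewrite E.
  - rewrite !ie0. rewrite half_diff. specialize (Hw (Nat.div2 i) ltac:(lia)).
    pose proof (distC_fst (z (Nat.div2 i)) (w (Nat.div2 i))). pose proof (Rabs_pos (fst (z (Nat.div2 i)) - fst (w (Nat.div2 i)))). lra.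
  - rewrite !ie1. rewrite half_diff. specialize (Hw (Nat.div2 i) ltac:(lia)).
    pose proof (distC_snd (z (Nat.div2 i)) (w (Nat.div2 i))). pose proof (Rabs_pos (snd (z (Nat.div2 i)) - snd (w (Nat.div2 i)))). lra.
Qed.

Lemma cinv_unit w : fst w ^ 2 + snd w ^ 2 = 1 -> cinv w = (fst w, - snd w).
Proof. intros H. unfold cinv. simpl. simpl in H. rewrite H. f_equal; field. Qed.

Lemma cexpi_unit t : fst (cexpi t) ^ 2 + snd (cexpi t) ^ 2 = 1.
Proof. unfold cexpi; simpl. pose proof (sin2_cos2 t). unfold Rsqr in H. lra. Qed.

Lemma cmul_cinv_cexpi a b : cmul (cexpi a) (cinv (cexpi b)) = cexpi (a - b).
Proof.
  rewrite cinv_unit by apply cexpi_unit. unfold cmul, cexpi; simpl.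
  rewrite cos_minus, sin_minus. f_equal; ring.
Qed.

Lemma unit_bound x y : x ^ 2 + y ^ 2 = 1 -> Rabs x <= 1.
Proof. intros. apply Rabs_le. nra. Qed.


Lemma S_ext S (HS : good S) a b : (forall n, a n = b n) -> S b -> S a.
Proof.
  intros H Hb. destruct HS as [P1 _]. apply (P1 a b b 1 Hb Hb). intros n. rewrite H.
  pose proof (Rabs_pos (b n)). lra.
Qed.

Lemma red1 S (HS : good S) : borel_reducible distR distC cube (cube_rel S) torusN (torus_rel (Gof S)).
Proof.
  exists f1. split.
  - apply borel_map_of; [|apply f1_open]. intros x _ n. apply cexpi_unit.
  - intros x y Hx Hy. unfold cube_rel, torus_rel, Gof, f1. split.
    + intros H. exists (fun n => x n - y n). split; auto. intros n. apply cmul_cinv_cexpi.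
    + intros [g [Hg Heq]]. destruct HS as [P1 _].
      apply (P1 _ g g 32 Hg Hg). intros n.
      specialize (Heq n). rewrite cmul_cinv_cexpi in Heq.
      specialize (Hx n). specialize (Hy n). pose proof PI2_1.
      pose proof (angle_lb (x n - y n) ltac:(lra)). rewrite Heq in H0.
      pose proof (angle_ub (g n)). pose proof (Rabs_pos (g n)). lra.
Qed.

Ltac lin_unit Hw c :=
  match goal with |- ?l = ?r =>
    let E := fresh "E" in
    match type of Hw with ?A = 1 =>
    first [assert (E : l - r = c * (A - 1)) by ring | assert (E : l - r = (- c) * (A - 1)) by ring];
    rewrite Hw in E;
    ring_simplify in E; lra end end.

Lemma unit_diff z w : fst z ^ 2 + snd z ^ 2 = 1 -> fst w ^ 2 + snd w ^ 2 = 1 ->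
  Rabs (fst z - fst w) <= 2 * distC (cmul z (cinv w)) (1,0) /\
  Rabs (snd z - snd w) <= 2 * distC (cmul z (cinv w)) (1,0) /\
  distC (cmul z (cinv w)) (1,0) <= Rabs (fst z - fst w) + Rabs (snd z - snd w).
Proof.
  intros Hz Hw. rewrite cinv_unit by auto.
  destruct z as [z1 z2]; destruct w as [w1 w2]; simpl in *. unfold distC, cmul; simpl.
  set (u1 := z1 * w1 - z2 * - w2). set (u2 := z1 * - w2 + z2 * w1).
  pose proof (Rmax_l (Rabs (u1 - 1)) (Rabs (u2 - 0))).
  pose proof (Rmax_r (Rabs (u1 - 1)) (Rabs (u2 - 0))).
  assert (Hw1 : Rabs w1 <= 1) by (apply (unit_bound w1 w2); auto).
  assert (Hw2 : Rabs w2 <= 1) by (apply (unit_bound w2 w1); lra).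
  assert (Hw2' : Rabs (- w2) <= 1) by (rewrite Rabs_Ropp; auto).
  split; [|split].
  - replace (z1 - w1) with (w1 * (u1 - 1) + (- w2) * (u2 - 0)) by (unfold u1, u2; lin_unit Hw (-z1)).
    eapply Rle_trans; [apply abs_comb; auto|]. lra.
  - replace (z2 - w2) with (w2 * (u1 - 1) + w1 * (u2 - 0)) by (unfold u1, u2; lin_unit Hw (-z2)).
    eapply Rle_trans; [apply abs_comb; auto|]. lra.
  - apply Rmax_lub.
    + replace (u1 - 1) with (w1 * (z1 - w1) + w2 * (z2 - w2)) by (unfold u1; lin_unit Hw 1).
      apply abs_comb; auto.
    + replace (u2 - 0) with ((- w2) * (z1 - w1) + w1 * (z2 - w2)) by (unfold u2; ring).
      apply abs_comb; auto.
Qed.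

Lemma red2 S (HS : good S) : borel_reducible distC distR torusN (torus_rel (Gof S)) cube (cube_rel S).
Proof.
  pose proof HS as [P1 [P2 P3]].
  exists f2. split.
  - apply borel_map_of; [|apply f2_open]. intros z Hz i. unfold f2.
    destruct (ie_div i) as [E|E]; rewrite E; [rewrite ie0|rewrite ie1];
      specialize (Hz (Nat.div2 i)); split; nra.
  - intros z w Hz Hw. unfold cube_rel, torus_rel, Gof. split.
    + intros [g [Hg Heq]].
      apply (P1 _ (interleave g g) (interleave g g) 2); [apply P3; auto|apply P3; auto|].
      intros i. unfold f2. destruct (ie_div i) as [E|E]; rewrite E; [rewrite !ie0|rewrite !ie1];
        rewrite half_diff; set (j := Nat.div2 i);
        destruct (unit_diff (z j) (w j) (Hz j) (Hw j)) as [U1 [U2 U3]];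
        rewrite Heq in U1, U2; pose proof (angle_ub (g j)); pose proof (Rabs_pos (g j)); lra.
    + intros H.
      set (a := fun n => (fst (z n) + 1) / 2 - (fst (w n) + 1) / 2).
      set (b := fun n => (snd (z n) + 1) / 2 - (snd (w n) + 1) / 2).
      assert (Hab : S (interleave a b)).
      { apply (S_ext S HS _ (fun i => f2 z i - f2 w i)); auto.
        intros i. unfold f2, a, b. destruct (ie_div i) as [E|E]; rewrite E;
          [rewrite !ie0|rewrite !ie1]; reflexivity. }
      destruct (P2 _ _ Hab) as [Ha Hb].
      set (u := fun n => cmul (z n) (cinv (w n))).
      assert (Hu : forall n, fst (u n) ^ 2 + snd (u n) ^ 2 = 1).
      { intros n. unfold u. rewrite cinv_unit by apply Hw.
        specialize (Hz n). specialize (Hw n). unfold cmul; simpl. simpl in Hz, Hw. nra. }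
      exists (fun n => ang (u n)). split.
      * apply (P1 _ a b 64 Ha Hb). intros n.
        destruct (ang_spec (u n) (Hu n)) as [E1 E2].
        pose proof (angle_lb _ E2). rewrite E1 in H0.
        destruct (unit_diff (z n) (w n) (Hz n) (Hw n)) as [_ [_ U3]].
        unfold a, b. rewrite !half_diff. unfold u in *. lra.
      * intros n. symmetry. apply (ang_spec (u n) (Hu n)).
Qed.


Theorem gen (S : (nat -> R) -> Prop) : good S ->
  borel_bireducible distR distC cube (cube_rel S) torusN (torus_rel (Gof S)).
Proof. intros H. split; [apply red1|apply red2]; auto. Qed.

Theorem mainTheorem3 :
  borel_bireducible distR distC cube (cube_rel c0) torusN (torus_rel (Gof c0))
  /\
  (forall p : R, 1 <= p ->
    borel_bireducible distR distC cube (cube_rel (lp p))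
      torusN (torus_rel (Gof (lp p)))).
Proof.
  split.
  - apply gen. apply good_c0.
  - intros p Hp. apply gen. apply good_lp. exact Hp.
Qed.
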